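(* Let $\Gamma_1=(V_1,E_1)$ be a graph of maximum degree $\Delta_1$ and let $\Gamma_2=(V_2,E_2)$ be a graph of maximum degree $\Delta_2$ and minimum degree $\delta_2$. Let $S\subseteq V_1$. (i) If $S$ is a global offensive $k$-alliance in $\Gamma_1$, then $S\times V_2$ is a global offensive $(k-\Delta_2)$-alliance in $\Gamma_1\times\Gamma_2$. (ii) If $S\times V_2$ is a global offensive $k$-alliance in $\Gamma_1\times\Gamma_2$, then $S$ is a global offensive $(k+\delta_2)$-alliance in $\Gamma_1$; moreover, $k\le\Delta_1-\delta_2$.
   Context: Graphs are finite and simple. In a graph $G=(V,E)$, for $S\subseteq V$ and $v\in V$, $\delta_S(v)$ is the number of neighbours of $v$ in $S$, $\overline{S}=V\setminus S$, and $\partial(S)$ the set of vertices of $\overline{S}$ with a neighbour in $S$. A nonempty $S$ is an offensive $k$-alliance in $G$ if $\delta_S(v)\ge\delta_{\overline{S}}(v)+k$ for every $v\in\partial(S)$, and a global offensive $k$-alliance if moreover it is dominating (every vertex of $\overline{S}$ has a neighbour in $S$). The Cartesian product $\Gamma_1\times\Gamma_2$ has vertex set $V_1\times V_2$, with $(u,v)\sim(u',v')$ iff either $u=u'$ and $v\sim v'$, or $v=v'$ and $u\sim u'$. *)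

(* Defs.v *)
From mathcomp Require Import all_boot all_order all_algebra.
Set Implicit Arguments. Unset Strict Implicit. Unset Printing Implicit Defensive.
Import Order.TTheory GRing.Theory Num.Theory.

(* A finite simple graph: vertex set a finType T, adjacency e : rel T,
   assumed symmetric and irreflexive (hypotheses in the theorem). *)

Section Graph.
Variables (T : finType) (e : rel T).

Definition deltaS (S : {set T}) (v : T) : nat := #|[set u in S | e v u]|.

Definition deg (v : T) : nat := #|[set u | e v u]|.

(* maximum degree (0 for the empty graph) *)
Definition maxdeg : nat := \max_(v : T) deg v.

(* minimum degree (for nonempty T this is the true minimum, since deg v < #|T|) *)
Definition mindeg : nat := \big[minn/#|T|]_(v : T) deg v.

Definition boundary (S : {set T}) : {set T} :=
  [set v in ~: S | [exists u in S, e v u]].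

Definition offensive_alliance (k : int) (S : {set T}) : Prop :=
  S != set0 /\
  forall v, v \in boundary S -> ((deltaS (~: S) v)%:Z + k <= (deltaS S v)%:Z)%R.

Definition dominating (S : {set T}) : Prop :=
  forall v, v \notin S -> exists2 u, u \in S & e v u.

Definition global_offensive_alliance (k : int) (S : {set T}) : Prop :=
  offensive_alliance k S /\ dominating S.

End Graph.

Definition cart_rel (T1 T2 : finType) (e1 : rel T1) (e2 : rel T2) : rel (T1 * T2) :=
  fun x y => ((x.1 == y.1) && e2 x.2 y.2) || ((x.2 == y.2) && e1 x.1 y.1).

(* Main.v *)
Require Import Defs.
From mathcomp Require Import all_boot all_order all_algebra zify.
Import Order.TTheory GRing.Theory Num.Theory.

Lemma mindeg_le (T : finType) {e : rel T} v : mindeg e <= deg e v.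
Proof.
rewrite /mindeg; have : v \in index_enum T by rewrite mem_index_enum.
elim: (index_enum T) => [//|a r IH]; rewrite in_cons big_cons.
case/orP=> [/eqP <-|H]; first exact: geq_minl.
exact: leq_trans (geq_minr _ _) (IH H).
Qed.

Lemma maxdeg_ge (T : finType) {e : rel T} v : deg e v <= maxdeg e.
Proof. exact: (leq_bigmax v). Qed.

Lemma deg_ge (T : finType) (e : rel T) S v : deltaS e S v <= deg e v.
Proof. apply: subset_leq_card; apply/subsetP=> x; rewrite !inE; case/andP=> _ ->. by []. Qed.

Section P.
Variables (T1 T2 : finType) (e1 : rel T1) (e2 : rel T2)
  (irr1 : irreflexive e1) (irr2 : irreflexive e2) (S : {set T1}).

Lemma deltaA u v : u \notin S ->
  deltaS (cart_rel e1 e2) (setX S [set: T2]) (u, v) = deltaS e1 S u.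
Proof.
move=> Hu; rewrite /deltaS.
have -> : [set w in setX S [set: T2] | cart_rel e1 e2 (u, v) w]
   = setX [set x in S | e1 u x] [set v].
  apply/setP=> [[x y]]; rewrite !inE /cart_rel /=.
  case: (eqVneq u x) => [<-|_]; first by rewrite (negbTE Hu).
  by rewrite /= andbT [y == v]eq_sym; case: (x \in S); case: (v == y); rewrite ?andbF ?andbT.
by rewrite cardsX cards1 muln1.
Qed.

Lemma deltaB u v : u \notin S ->
  deltaS (cart_rel e1 e2) (~: setX S [set: T2]) (u, v) = deg e2 v + deltaS e1 (~: S) u.
Proof.
move=> Hu; rewrite /deltaS /deg.
have -> : [set w in ~: setX S [set: T2] | cart_rel e1 e2 (u, v) w]
   = setX [set u] [set y | e2 v y] :|: setX [set x in ~: S | e1 u x] [set v].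
  apply/setP=> [[x y]]; rewrite !inE /cart_rel /= andbT.
  case: (eqVneq u x) => [<-|nux]; first by rewrite Hu /= irr1 !andbF orbF.
  rewrite /= [y == v]eq_sym.
  by case: (x \in S); case: (v == y); rewrite ?andbF ?andbT.
rewrite cardsU !cardsX !cards1 muln1 mul1n.
suff -> : setX [set u] [set y | e2 v y] :&: setX [set x in ~: S | e1 u x] [set v] = set0.
  by rewrite cards0 subn0.
apply/setP=> [[x y]]; rewrite !inE /=.
case: (eqVneq y v) => [->|]; first by rewrite irr2 !andbF.
by rewrite !andbF.
Qed.

Lemma bndP u v : ((u, v) \in boundary (cart_rel e1 e2) (setX S [set: T2])) = (u \in boundary e1 S).
Proof.
rewrite /boundary !inE andbT; case Hu: (u \in S) => //=.
apply/existsP/existsP => [[[x y]]|[x]].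
  rewrite !inE andbT /cart_rel /=; case/andP=> Hx.
  case/orP=> /andP[/eqP ux H]; first by rewrite -ux Hu in Hx.
  by exists x; rewrite Hx.
case/andP=> Hx H; exists (x, v); rewrite !inE Hx /cart_rel /= eqxx H.
by rewrite orbT.
Qed.
End P.

Theorem mainTheorem13 (T1 T2 : finType) (e1 : rel T1) (e2 : rel T2)
  (sym1 : symmetric e1) (irr1 : irreflexive e1)
  (sym2 : symmetric e2) (irr2 : irreflexive e2)
  (ne2 : 0 < #|T2|) (S : {set T1}) (k : int) :
  (global_offensive_alliance e1 k S ->
     global_offensive_alliance (cart_rel e1 e2) (k - (maxdeg e2)%:Z)%R
       (setX S [set: T2]))
  /\
  (global_offensive_alliance (cart_rel e1 e2) k (setX S [set: T2]) ->
     global_offensive_alliance e1 (k + (mindeg e2)%:Z)%R S /\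
     (S != [set: T1] -> (k <= (maxdeg e1)%:Z - (mindeg e2)%:Z)%R)).
Proof.
have [v0 _] : exists v0 : T2, v0 \in [set: T2].
  by apply/set0Pn; rewrite -cards_eq0 cardsT -lt0n.
split.
  move=> [[SN Hoff] Hdom]; split; first split.
  - case/set0Pn: SN => u Hu; apply/set0Pn; exists (u, v0); by rewrite !inE Hu.
  - move=> [u v] Hb; have Hu : u \notin S by (move: (Hb); rewrite bndP // /boundary !inE; case/andP => ->).
    rewrite bndP in Hb; have := Hoff u Hb.
    rewrite deltaA // deltaB //.
    have := (@maxdeg_ge _ e2 v); lia.
  - move=> [u v]; rewrite !inE andbT => Hu.
    have [x Hx Hux] := Hdom u Hu; exists (x, v); first by rewrite !inE Hx.
    by rewrite /cart_rel /= eqxx Hux orbT.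
move=> [[SN Hoff] Hdom].
have Hd : dominating e1 S.
  move=> u Hu; have Hn : (u, v0) \notin setX S [set: T2] by rewrite !inE andbT.
  have [[x y]] := Hdom (u, v0) Hn.
  rewrite !inE andbT /cart_rel /= => Hx; case/orP=> /andP[/eqP ux H].
    by rewrite ux Hx in Hu.
  by exists x.
have Hof : forall u, u \in boundary e1 S ->
    ((deltaS e1 (~: S) u)%:Z + (k + (mindeg e2)%:Z) <= (deltaS e1 S u)%:Z)%R.
  move=> u Hb; have Hu : u \notin S by (move: (Hb); rewrite /boundary !inE; case/andP => ->).
  have := Hoff (u, v0); rewrite bndP Hb => /(_ isT).
  rewrite deltaA // deltaB //.
  have := (@mindeg_le _ e2 v0); lia.
split; first split => //; first split => //.
  case/set0Pn: SN => [[u v]]; rewrite !inE andbT => Hu; apply/set0Pn; by exists u.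
move=> HS; have /properP[_ [u _ Hu]] : S \proper [set: T1] by rewrite properT.
have Hb : u \in boundary e1 S.
  have [x Hx Hux] := Hd u Hu; rewrite /boundary !inE Hu /=.
  by apply/existsP; exists x; rewrite Hx.
have := Hof u Hb; have := (@deg_ge _ e1 S u); have := (@maxdeg_ge _ e1 u); lia.
Qed.
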